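(* Let $\Omega\subset\mathbb{R}^2$ be a bounded convex set with non-empty interior which has the same symmetry axes as an equilateral triangle (i.e. it is symmetric with respect to three lines through a common point forming pairwise angles $\pi/3$). Then there exist $a\in[0,1/3]$ and a map $g$ which is a composition of a rigid motion and a homothety such that $g(\Omega)\in\mathcal C_a$.
   Context: Let $T$ be the equilateral triangle with vertices $(\pm1/2,0)$ and $(0,\sqrt3/2)$; its symmetry axes are the lines $x=0$, $-x+\sqrt3 y=1/2$, $x+\sqrt3y=1/2$. For $a\in[0,1/2]$, let $\hat T_a$ be the equilateral triangle bounded by the lines $y=\frac{\sqrt3}{2}(1-a)$ and $y=\pm\sqrt3x-\sqrt3(\frac12-a)$. Let $\Omega_a=\hat T_a\cap T$, the hexagon with vertices $(\pm\frac a2,\frac{\sqrt3}{2}(1-a))$, $(\pm(\frac12-a),0)$, $(\pm\frac12(1-a),\frac{\sqrt3}{2}a)$. Let $H_a$ be the hexagon with vertices $(0,0)$, $(\pm(\frac12-\frac34a),\frac{\sqrt3}{4}a)$, $(\pm\frac14,\frac{\sqrt3}4)$, $(0,\frac{\sqrt3}{2}(1-a))$ (the midpoints of the sides of $\Omega_a$). For $a\in[0,1/2]$, $\mathcal C_a$ is the class of convex sets $\Omega$ symmetric with respect to the three symmetry axes of $T$ and satisfying $H_a\subset\overline\Omega\subset\overline{\Omega_a}$ (sets identified with their closures). *)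

(* Defs.v *)
From Stdlib Require Import Reals Lra.
Open Scope R_scope.

Definition pt : Type := (R * R)%type.

Definition dist (p q : pt) : R :=
  sqrt ((fst p - fst q) ^ 2 + (snd p - snd q) ^ 2).

Definition convex_set (S : pt -> Prop) : Prop :=
  forall p q t, S p -> S q -> 0 <= t <= 1 ->
    S ((1 - t) * fst p + t * fst q, (1 - t) * snd p + t * snd q).

Definition bounded_set (S : pt -> Prop) : Prop :=
  exists M, forall p, S p -> dist p (0, 0) <= M.

Definition nonempty_interior (S : pt -> Prop) : Prop :=
  exists p r, 0 < r /\ forall q, dist p q < r -> S q.

Definition closure (S : pt -> Prop) (p : pt) : Prop :=
  forall e, 0 < e -> exists q, S q /\ dist p q < e.

Definition image (g : pt -> pt) (S : pt -> Prop) (q : pt) : Prop :=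
  exists p, S p /\ q = g p.

(* reflection across the line through c with direction angle th *)
Definition refl_dir (c : pt) (th : R) (p : pt) : pt :=
  let u := fst p - fst c in let v := snd p - snd c in
  (fst c + cos (2 * th) * u + sin (2 * th) * v,
   snd c + sin (2 * th) * u - cos (2 * th) * v).

(* reflection across the line {(x,y) | a1 x + a2 y = b}, (a1,a2) <> 0 *)
Definition refl_line (a1 a2 b : R) (p : pt) : pt :=
  let k := 2 * (a1 * fst p + a2 * snd p - b) / (a1 ^ 2 + a2 ^ 2) in
  (fst p - k * a1, snd p - k * a2).

Definition symmetric_wrt (f : pt -> pt) (S : pt -> Prop) : Prop :=
  forall p, S p <-> S (f p).

Definition triangle_symmetric (S : pt -> Prop) : Prop :=
  exists (c : pt) (th : R),
    symmetric_wrt (refl_dir c th) S /\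
    symmetric_wrt (refl_dir c (th + PI / 3)) S /\
    symmetric_wrt (refl_dir c (th + 2 * PI / 3)) S.

(* symmetric w.r.t. the axes x=0, -x+sqrt3 y=1/2, x+sqrt3 y=1/2 of T *)
Definition T_symmetric (S : pt -> Prop) : Prop :=
  symmetric_wrt (refl_line 1 0 0) S /\
  symmetric_wrt (refl_line (-1) (sqrt 3) (1/2)) S /\
  symmetric_wrt (refl_line 1 (sqrt 3) (1/2)) S.

(* the triangle T with vertices (+-1/2,0), (0,sqrt3/2) *)
Definition T_set (p : pt) : Prop :=
  0 <= snd p /\ snd p <= sqrt 3 * (fst p + 1/2) /\ snd p <= - sqrt 3 * (fst p - 1/2).

Definition That (a : R) (p : pt) : Prop :=
  snd p <= sqrt 3 / 2 * (1 - a) /\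
  sqrt 3 * fst p - sqrt 3 * (1/2 - a) <= snd p /\
  - sqrt 3 * fst p - sqrt 3 * (1/2 - a) <= snd p.

Definition Omega (a : R) (p : pt) : Prop := That a p /\ T_set p.

Definition conv_hull6 (p1 p2 p3 p4 p5 p6 : pt) (q : pt) : Prop :=
  exists w1 w2 w3 w4 w5 w6 : R,
    0 <= w1 /\ 0 <= w2 /\ 0 <= w3 /\ 0 <= w4 /\ 0 <= w5 /\ 0 <= w6 /\
    w1 + w2 + w3 + w4 + w5 + w6 = 1 /\
    fst q = w1 * fst p1 + w2 * fst p2 + w3 * fst p3 + w4 * fst p4 + w5 * fst p5 + w6 * fst p6 /\
    snd q = w1 * snd p1 + w2 * snd p2 + w3 * snd p3 + w4 * snd p4 + w5 * snd p5 + w6 * snd p6.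

Definition H (a : R) : pt -> Prop :=
  conv_hull6 (0, 0)
             (1/2 - 3/4 * a, sqrt 3 / 4 * a)
             (1/4, sqrt 3 / 4)
             (0, sqrt 3 / 2 * (1 - a))
             (- (1/4), sqrt 3 / 4)
             (- (1/2 - 3/4 * a), sqrt 3 / 4 * a).

(* the class C_a (sets identified with their closures) *)
Definition class_C (a : R) (S : pt -> Prop) : Prop :=
  convex_set S /\ T_symmetric S /\
  (forall p, H a p -> closure S p) /\
  (forall p, closure S p -> closure (Omega a) p).

Definition rigid_motion (f : pt -> pt) : Prop :=
  forall p q, dist (f p) (f q) = dist p q.

Definition homothety (h : pt -> pt) : Prop :=
  exists (c : pt) (lam : R), lam <> 0 /\
    forall p, h p = (fst c + lam * (fst p - fst c), snd c + lam * (snd p - snd c)).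

Definition similarity (g : pt -> pt) : Prop :=
  exists f h, rigid_motion f /\ homothety h /\ forall p, g p = f (h p).

(* Main.v *)
Require Import Defs.
From Stdlib Require Import Reals Lra Psatz Nsatz List Classical FunctionalExtensionality PropExtensionality.
Require Import Defs.
Open Scope R_scope.

Ltac invs := 
  assert (2 * /2 = 1) by field; assert (3*/3=1) by field;
  assert (4 * /4 = 1) by field; assert (6*/6=1) by field.
Ltac clean := repeat match goal with H : ?T |- _ =>
  lazymatch T with @eq R _ _ => fail | R => fail | _ => clear H end end.
Ltac sfield := unfold Rdiv; rewrite ?Rinv_1; clean; invs; nsatz.

Ltac rabs := unfold Rabs in *; repeat match goal with |- context [Rcase_abs ?x] => destruct (Rcase_abs x) 
 | H : context [Rcase_abs ?x] |- _ => destruct (Rcase_abs x) end; lra.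

Lemma ptS (S : pt -> Prop) x y x' y' : S (x,y) -> x = x' -> y = y' -> S (x',y').
Proof. intros H -> ->; exact H. Qed.

Lemma abs_fst_le_dist p q : Rabs (fst p - fst q) <= dist p q.
Proof.
  unfold dist. rewrite <- sqrt_Rsqr_abs. apply sqrt_le_1_alt. unfold Rsqr. pose proof (pow2_ge_0 (snd p - snd q)); pose proof (pow2_ge_0 (fst p - fst q)); simpl in *; lra.
Qed.
Lemma abs_snd_le_dist p q : Rabs (snd p - snd q) <= dist p q.
Proof.
  unfold dist. rewrite <- sqrt_Rsqr_abs. apply sqrt_le_1_alt. unfold Rsqr. pose proof (pow2_ge_0 (snd p - snd q)); pose proof (pow2_ge_0 (fst p - fst q)); simpl in *; lra.
Qed.
Lemma dist_le_abs p q : dist p q <= Rabs (fst p - fst q) + Rabs (snd p - snd q).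
Proof.
  unfold dist. rewrite <- (sqrt_square (Rabs (fst p - fst q) + Rabs (snd p - snd q))).
  2: { pose proof (Rabs_pos (fst p - fst q)); pose proof (Rabs_pos (snd p - snd q)); lra. }
  apply sqrt_le_1_alt.
  pose proof (Rabs_pos (fst p - fst q)); pose proof (Rabs_pos (snd p - snd q)).
  rewrite <- (pow2_abs (fst p - fst q)), <- (pow2_abs (snd p - snd q)). nra.
Qed.

Lemma dist_refl p : dist p p = 0.
Proof. unfold dist. replace ((fst p - fst p) ^ 2 + (snd p - snd p) ^ 2) with 0 by ring. apply sqrt_0. Qed.

Lemma closure_of S p : S p -> closure S p.
Proof. intros H e He. exists p. rewrite dist_refl. auto. Qed.

Lemma closure_convex S : convex_set S -> convex_set (closure S).
Proof.
  intros HS p q t Hp Hq Ht e He.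
  destruct (Hp (e/4)) as [p' [Hp' Dp]]; [lra|].
  destruct (Hq (e/4)) as [q' [Hq' Dq]]; [lra|].
  exists ((1 - t) * fst p' + t * fst q', (1 - t) * snd p' + t * snd q').
  split; [apply HS; auto|].
  eapply Rle_lt_trans; [apply dist_le_abs|]. simpl.
  pose proof (abs_fst_le_dist p p'); pose proof (abs_snd_le_dist p p').
  pose proof (abs_fst_le_dist q q'); pose proof (abs_snd_le_dist q q').
  assert (Rabs ((1 - t) * fst p + t * fst q - ((1 - t) * fst p' + t * fst q')) <= e/4).
  { replace ((1 - t) * fst p + t * fst q - ((1 - t) * fst p' + t * fst q')) with
      ((1-t)*(fst p - fst p') + t * (fst q - fst q')) by ring.
    eapply Rle_trans; [apply Rabs_triang|]. rewrite !Rabs_mult.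
    rewrite (Rabs_right (1-t)) by lra. rewrite (Rabs_right t) by lra. nra. }
  assert (Rabs ((1 - t) * snd p + t * snd q - ((1 - t) * snd p' + t * snd q')) <= e/4).
  { replace ((1 - t) * snd p + t * snd q - ((1 - t) * snd p' + t * snd q')) with
      ((1-t)*(snd p - snd p') + t * (snd q - snd q')) by ring.
    eapply Rle_trans; [apply Rabs_triang|]. rewrite !Rabs_mult.
    rewrite (Rabs_right (1-t)) by lra. rewrite (Rabs_right t) by lra. nra. }
  lra.
Qed.

Lemma closure_sym S (f : pt -> pt) : (forall q, S q -> S (f q)) ->
  (forall p q, dist (f p) (f q) = dist p q) -> forall p, closure S p -> closure S (f p).
Proof.
  intros Hs Hd p Hp e He. destruct (Hp e He) as [q [Hq D]]. exists (f q). rewrite Hd. auto.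
Qed.

Lemma closure_halfplane S al be ga : (forall q, S q -> al * fst q + be * snd q <= ga) ->
  forall p, closure S p -> al * fst p + be * snd p <= ga.
Proof.
  intros HS p Hp. destruct (Rle_dec (al * fst p + be * snd p) ga) as [|Hn]; auto.
  exfalso. set (d := al * fst p + be * snd p - ga).
  assert (Hd : 0 < d) by (unfold d; lra).
  set (k := Rabs al + Rabs be + 1).
  assert (Hk : 0 < k) by (unfold k; pose proof (Rabs_pos al); pose proof (Rabs_pos be); lra).
  destruct (Hp (d / k)) as [q [Hq D]]. { apply Rdiv_lt_0_compat; auto. }
  specialize (HS q Hq).
  pose proof (abs_fst_le_dist p q); pose proof (abs_snd_le_dist p q).
  assert (al * (fst p - fst q) + be * (snd p - snd q) <= Rabs al * dist p q + Rabs be * dist p q).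
  { assert (al * (fst p - fst q) <= Rabs al * dist p q).
    { eapply Rle_trans; [apply Rle_abs|]. rewrite Rabs_mult. apply Rmult_le_compat_l; auto. apply Rabs_pos. }
    assert (be * (snd p - snd q) <= Rabs be * dist p q).
    { eapply Rle_trans; [apply Rle_abs|]. rewrite Rabs_mult. apply Rmult_le_compat_l; auto. apply Rabs_pos. }
    lra. }
  assert (k * dist p q < d).
  { apply (Rmult_lt_compat_l k) in D; auto. unfold Rdiv in D. 
    replace (k * (d * / k)) with d in D by (field; lra). auto. }
  assert (0 <= dist p q) by (unfold dist; apply sqrt_pos).
  unfold k in *. unfold d in *. nra.
Qed.

Fixpoint lw (l : list (R*pt)) : R := match l with nil => 0 | (w,p)::t => w + lw t end.
Fixpoint lx (l : list (R*pt)) : R := match l with nil => 0 | (w,p)::t => w * fst p + lx t end.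
Fixpoint ly (l : list (R*pt)) : R := match l with nil => 0 | (w,p)::t => w * snd p + ly t end.
Definition lscale (k : R) (l : list (R*pt)) := map (fun wp => (fst wp * k, snd wp)) l.

Lemma lscale_w k l : lw (lscale k l) = lw l * k.
Proof. induction l as [|[w p] t IH]; simpl; [ring|]. rewrite IH; ring. Qed.
Lemma lscale_x k l : lx (lscale k l) = lx l * k.
Proof. induction l as [|[w p] t IH]; simpl; [ring|]. rewrite IH; ring. Qed.
Lemma lscale_y k l : ly (lscale k l) = ly l * k.
Proof. induction l as [|[w p] t IH]; simpl; [ring|]. rewrite IH; ring. Qed.

Definition lok (S : pt -> Prop) (l : list (R*pt)) := Forall (fun wp => 0 <= fst wp /\ S (snd wp)) l.

Lemma lw_nonneg S l : lok S l -> 0 <= lw l.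
Proof. induction 1 as [|[w p] t [H1 H2] _ IH]; simpl in *; lra. Qed.

Lemma lw_zero S l : lok S l -> lw l = 0 -> lx l = 0 /\ ly l = 0.
Proof.
  induction 1 as [|[w p] t [H1 H2] Ht IH]; simpl in *; [auto|].
  intros E. pose proof (lw_nonneg S t Ht). assert (w = 0) by lra. subst w.
  destruct IH as [-> ->]; [lra|]. split; ring.
Qed.

Lemma lok_scale S k l : 0 <= k -> lok S l -> lok S (lscale k l).
Proof.
  intros Hk. induction 1 as [|[w p] t [H1 H2] Ht IH]; simpl; constructor; auto.
  simpl in *. split; auto. nra.
Qed.

Lemma conv_list_k S : convex_set S -> forall l k, 0 < k -> lok S l -> lw l * k = 1 ->
  S (lx l * k, ly l * k).
Proof.
  intros HS. induction l as [|[w p] t IH]; simpl; intros k Hk Hl E; [lra|].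
  inversion Hl as [|x y [H1 H2] Ht]; subst. simpl in *.
  pose proof (lw_nonneg S t Ht).
  destruct (Req_dec (w*k) 1) as [Hw|Hw].
  - destruct (lw_zero S t Ht) as [E1 E2]; [nra|]. rewrite E1, E2.
    destruct p as [px py]. simpl. eapply ptS; [exact H2| | ]; rewrite Rmult_plus_distr_r, Rmult_comm, <- Rmult_assoc, (Rmult_comm k), Hw; ring.
  - assert (Hpos : 0 < 1 - w * k) by nra.
    assert (HI : S (lx t * (k / (1 - w*k)), ly t * (k / (1 - w*k)))).
    { apply IH; auto. apply Rdiv_lt_0_compat; auto.
      replace (lw t * (k / (1 - w * k))) with ((lw t * k) / (1 - w*k)) by (field; lra).
      replace (lw t * k) with (1 - w*k) by lra. field; lra. }
    pose proof (HS _ _ (w*k) HI H2 ltac:(nra)) as HC. simpl in HC.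
    eapply ptS; [exact HC| field; lra | field; lra].
Qed.

Lemma conv_list S : convex_set S -> forall l, lok S l -> lw l = 1 -> S (lx l, ly l).
Proof.
  intros HS l Hl E. pose proof (conv_list_k S HS l 1 ltac:(lra) Hl ltac:(lra)) as H.
  rewrite !Rmult_1_r in H. exact H.
Qed.

Definition rAB (A B : R) (q : pt) : pt := (A * fst q + B * snd q, B * fst q - A * snd q).

Lemma closure_affine S mu c p : 0 < mu -> closure S (mu * fst p, mu * (snd p - c)) ->
  closure (fun q => S (mu * fst q, mu * (snd q - c))) p.
Proof.
  intros Hmu H e He. destruct p as [px py]. destruct (H (mu*e)) as [[x y] [Sq D]]; [nra|].
  exists (x/mu, y/mu + c). split.
  - cbn. eapply ptS; [exact Sq| field; lra | field; lra].
  - unfold dist in *. cbn [fst snd] in *.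
    assert (E : (mu * px - x) ^ 2 + (mu * (py - c) - y) ^ 2 =
      mu^2 * ((px - x / mu) ^ 2 + (py - (y / mu + c)) ^ 2)) by (field; lra).
        rewrite E, sqrt_mult_alt, sqrt_pow2 in D; try lra.
    2: { pose proof (pow2_ge_0 mu); lra. }
    apply Rmult_lt_reg_l with mu; auto.
Qed.

Lemma closure_aff S al be ga : (forall q, S q -> 0 <= al * fst q + be * snd q + ga) ->
  forall p, closure S p -> 0 <= al * fst p + be * snd p + ga.
Proof.
  intros H p Hp. pose proof (closure_halfplane S (-al) (-be) ga) as K.
  assert (-al * fst p + -be * snd p <= ga); [|lra].
  apply K; auto. intros q Hq. specialize (H q Hq). lra.
Qed.

Lemma lin_pos l C T : 0 < l -> C = l * T -> 0 <= C -> 0 <= T.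
Proof. intros Hl -> HC. nra. Qed.

Lemma rAB_dist A B : A^2 + B^2 = 1 -> forall p q, dist (rAB A B p) (rAB A B q) = dist p q.
Proof. intros HAB p q. unfold dist, rAB; cbn [fst snd]. f_equal.
 transitivity ((A^2+B^2) * ((fst p - fst q) ^ 2 + (snd p - snd q) ^ 2)). ring. rewrite HAB; ring. Qed.

Lemma sqrt3_sq : sqrt 3 * sqrt 3 = 3.
Proof. apply sqrt_sqrt. lra. Qed.
Lemma sqrt3_pos : 0 < sqrt 3.
Proof. apply sqrt_lt_R0. lra. Qed.

Lemma core S m M :
 convex_set S ->
 (forall q, S q <-> S (rAB (-1) 0 q)) ->
 (forall q, S q <-> S (rAB (1/2) (sqrt 3/2) q)) ->
 (forall q, S q <-> S (rAB (1/2) (-(sqrt 3/2)) q)) ->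
 (forall p, S p -> m <= snd p <= M) ->
 (forall e, 0 < e -> exists p, S p /\ snd p < m + e) ->
 (forall e, 0 < e -> exists p, S p /\ M - e < snd p) ->
 m < M -> -m <= M ->
 exists a mu, 0 < mu /\ 0 <= a <= 1/3 /\
   class_C a (fun q => S (mu * fst q, mu * (snd q - sqrt 3 / 6))).
Proof.
  intros HS Hy1 Hy2 Hy3 Hb Apm ApM HmM HmM2.
  pose proof sqrt3_sq as Hs. pose proof sqrt3_pos as Hs0.
  assert (Hb2 : forall p, S p -> m <= sqrt 3/2 * fst p - 1/2 * snd p <= M).
  { intros p Hp. apply Hy2, Hb in Hp. unfold rAB in Hp; cbn in Hp. exact Hp. }
  assert (Hb3 : forall p, S p -> m <= -(sqrt 3/2) * fst p - 1/2 * snd p <= M).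
  { intros p Hp. apply Hy3, Hb in Hp. unfold rAB in Hp; cbn in Hp. exact Hp. }
  assert (Hm : m < 0).
  { destruct (Rlt_or_le m 0) as [|Hm]; auto. exfalso.
    destruct (ApM ((M-m)/2)) as [p [Hp Hpy]]; [lra|].
    pose proof (Hb p Hp); pose proof (Hb2 p Hp); pose proof (Hb3 p Hp). lra. }
  assert (HM2 : M <= -2*m).
  { destruct (Rle_or_lt M (-2*m)) as [|HM]; auto. exfalso.
    destruct (ApM (M + 2*m)) as [p [Hp Hpy]]; [lra|].
    pose proof (Hb p Hp); pose proof (Hb2 p Hp); pose proof (Hb3 p Hp). lra. }
  set (a := (2 + M/m)/3).
  assert (HMa : M = -m * (2 - 3*a)) by (unfold a; field; lra).
  clearbody a.
  exists a, (-2 * sqrt 3 * m).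
  assert (Hmu : 0 < -2 * sqrt 3 * m) by nra.
  split; [auto|]. split; [split; nra|].
  set (U := fun q : pt => S (-2 * sqrt 3 * m * fst q, -2 * sqrt 3 * m * (snd q - sqrt 3 / 6))).
  split; [|split; [|split]].
  -
    intros p q t Hp Hq Ht. unfold U in *.
    pose proof (HS _ _ t Hp Hq Ht) as H. cbn in H. cbn.
    eapply ptS; [exact H| ring | ring].
  -
    assert (D1 : 1^2 + 0^2 = 1) by ring.
    assert (D2 : (-1)^2 + sqrt 3^2 = 4) by (simpl; nra).
    assert (D3 : 1^2 + sqrt 3^2 = 4) by (simpl; nra).
    split; [|split]; intros [x y]; unfold U, refl_line; cbn [fst snd];
      rewrite ?D1, ?D2, ?D3; clear D1 D2 D3; split; intro H.
    + apply Hy1 in H. unfold rAB in H; cbn in H. eapply ptS; [exact H| sfield | sfield].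
    + apply Hy1. unfold rAB; cbn. eapply ptS; [exact H| sfield | sfield].
    + apply Hy2 in H. unfold rAB in H; cbn in H. eapply ptS; [exact H| sfield | sfield].
    + apply Hy2. unfold rAB; cbn. eapply ptS; [exact H| sfield | sfield].
    + apply Hy3 in H. unfold rAB in H; cbn in H. eapply ptS; [exact H| sfield | sfield].
    + apply Hy3. unfold rAB; cbn. eapply ptS; [exact H| sfield | sfield].
  -
    intros p Hp.
    assert (C0 : closure S (0, m)).
    { intros e He. destruct (Apm e He) as [p0 [Sp Hp0]]. exists (0, snd p0). split.
      - pose proof (HS _ _ (1/2) Sp (proj1 (Hy1 p0) Sp) ltac:(lra)) as K.
        unfold rAB in K; cbn [fst snd] in K. eapply ptS; [exact K| lra | lra].
      - eapply Rle_lt_trans; [apply dist_le_abs|]. cbn [fst snd]. pose proof (Hb p0 Sp). rabs. }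
    assert (CM : closure S (0, M)).
    { intros e He. destruct (ApM e He) as [p0 [Sp Hp0]]. exists (0, snd p0). split.
      - pose proof (HS _ _ (1/2) Sp (proj1 (Hy1 p0) Sp) ltac:(lra)) as K.
        unfold rAB in K; cbn [fst snd] in K. eapply ptS; [exact K| lra | lra].
      - eapply Rle_lt_trans; [apply dist_le_abs|]. cbn [fst snd]. pose proof (Hb p0 Sp). rabs. }
    assert (Hd2 : forall p q, dist (rAB (1/2) (sqrt 3/2) p) (rAB (1/2)(sqrt 3/2) q) = dist p q)
      by (apply rAB_dist; replace ((sqrt 3/2)^2) with ((sqrt 3 * sqrt 3)/4) by field; rewrite Hs; field).
    assert (Hd3 : forall p q, dist (rAB (1/2) (-(sqrt 3/2)) p) (rAB (1/2)(-(sqrt 3/2)) q) = dist p q)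
      by (apply rAB_dist; replace ((-(sqrt 3/2))^2) with ((sqrt 3 * sqrt 3)/4) by field; rewrite Hs; field).
    pose proof (closure_sym S _ (fun q Hq => proj1 (Hy2 q) Hq) Hd2) as CS2.
    pose proof (closure_sym S _ (fun q Hq => proj1 (Hy3 q) Hq) Hd3) as CS3.
    destruct Hp as (w1 & w2 & w3 & w4 & w5 & w6 & h1 & h2 & h3 & h4 & h5 & h6 & hs & ex & ey).
    apply closure_affine; auto.
    set (l := (w1,(0,m)) :: (w2, rAB (1/2) (sqrt 3/2) (0,M)) :: (w3, rAB (1/2) (-(sqrt 3/2)) (0,m))
       :: (w4,(0,M)) :: (w5, rAB (1/2) (sqrt 3/2) (0,m)) :: (w6, rAB (1/2) (-(sqrt 3/2)) (0,M)) :: nil).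
    assert (Hl : closure S (lx l, ly l)).
    { apply conv_list. apply closure_convex; auto.
      - unfold l, lok. repeat (apply Forall_cons || apply Forall_nil); cbn [fst snd]; split; auto.
      - unfold l; simpl. lra. }
    cbn [fst snd] in ex, ey.
    eapply ptS; [exact Hl | |]; unfold l, rAB; simpl; [rewrite ex | rewrite ey]; clear ex ey; sfield.
  -
    intros p Hp. apply closure_of.
    assert (K1 : 0 <= 0 * fst p + 1 * snd p + 0).
    { apply (closure_aff U); auto. intros [x y] Hq. unfold U in Hq; cbn [fst snd] in *.
      pose proof (Hb _ Hq) as B; cbn [fst snd] in B.
      apply (lin_pos (-2*sqrt 3*m) (-2 * sqrt 3 * m * (y - sqrt 3 / 6) - m)); [lra| sfield | lra]. }
    assert (K2 : 0 <= sqrt 3 * fst p + (-1) * snd p + sqrt 3 / 2).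
    { apply (closure_aff U); auto. intros [x y] Hq. unfold U in Hq; cbn [fst snd] in *.
      pose proof (Hb2 _ Hq) as B; cbn [fst snd] in B.
      apply (lin_pos (-sqrt 3*m) (sqrt 3/2 * (-2 * sqrt 3 * m * x) - 1/2 * (-2 * sqrt 3 * m * (y - sqrt 3 / 6)) - m)); [nra| sfield | lra]. }
    assert (K3 : 0 <= - sqrt 3 * fst p + (-1) * snd p + sqrt 3 / 2).
    { apply (closure_aff U); auto. intros [x y] Hq. unfold U in Hq; cbn [fst snd] in *.
      pose proof (Hb3 _ Hq) as B; cbn [fst snd] in B.
      apply (lin_pos (-sqrt 3*m) (-(sqrt 3/2) * (-2 * sqrt 3 * m * x) - 1/2 * (-2 * sqrt 3 * m * (y - sqrt 3 / 6)) - m)); [nra| sfield | lra]. }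
    assert (K4 : 0 <= 0 * fst p + (-1) * snd p + sqrt 3 / 2 * (1 - a)).
    { apply (closure_aff U); auto. intros [x y] Hq. unfold U in Hq; cbn [fst snd] in *.
      pose proof (Hb _ Hq) as B; cbn [fst snd] in B.
      apply (lin_pos (-2*sqrt 3*m) (M - -2 * sqrt 3 * m * (y - sqrt 3 / 6))); [lra| sfield | lra]. }
    assert (K5 : 0 <= - sqrt 3 * fst p + 1 * snd p + sqrt 3 * (1/2 - a)).
    { apply (closure_aff U); auto. intros [x y] Hq. unfold U in Hq; cbn [fst snd] in *.
      pose proof (Hb2 _ Hq) as B; cbn [fst snd] in B.
      apply (lin_pos (-sqrt 3*m) (M - (sqrt 3/2 * (-2 * sqrt 3 * m * x) - 1/2 * (-2 * sqrt 3 * m * (y - sqrt 3 / 6))))); [nra| sfield | lra]. }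
    assert (K6 : 0 <= sqrt 3 * fst p + 1 * snd p + sqrt 3 * (1/2 - a)).
    { apply (closure_aff U); auto. intros [x y] Hq. unfold U in Hq; cbn [fst snd] in *.
      pose proof (Hb3 _ Hq) as B; cbn [fst snd] in B.
      apply (lin_pos (-sqrt 3*m) (M - (-(sqrt 3/2) * (-2 * sqrt 3 * m * x) - 1/2 * (-2 * sqrt 3 * m * (y - sqrt 3 / 6))))); [nra| sfield | lra]. }
    unfold Omega, That, T_set. repeat split; lra.
Qed.

Definition Fm (c : pt) (C Sn e : R) (q : pt) : pt :=
  (fst c + C * fst q + e * Sn * snd q, snd c - Sn * fst q + e * C * snd q).

Lemma F_refl c C Sn e cb sb A B th q : C*C + Sn*Sn = 1 -> e*e = 1 ->
  cos (2*th) = cb*(C*C-Sn*Sn) + sb*(2*Sn*C) -> sin (2*th) = sb*(C*C-Sn*Sn) - cb*(2*Sn*C) ->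
  A = cb -> B = e * sb ->
  Fm c C Sn e (rAB A B q) = refl_dir c th (Fm c C Sn e q).
Proof.
  intros HCS He Hc Hs -> ->. unfold Fm, rAB, refl_dir; cbn [fst snd]. rewrite Hc, Hs.
  f_equal; nsatz.
Qed.

Lemma finish Om c C Sn e a mu : C*C+Sn*Sn=1 -> e*e=1 -> 0<mu -> 0<=a<=1/3 ->
  class_C a (fun q => Om (Fm c C Sn e (mu * fst q, mu * (snd q - sqrt 3/6)))) ->
  exists a g, 0<=a<=1/3 /\ similarity g /\ class_C a (image g Om).
Proof.
  intros HCS He Hmu Ha HC. exists a.
  set (h := fun p : pt => (fst c + /mu * (fst p - fst c), snd c + /mu * (snd p - snd c))).
  set (f := fun q : pt => (0 + (C*(fst q - fst c) - Sn*(snd q - snd c)),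
                          sqrt 3/6 + e*(Sn*(fst q - fst c) + C*(snd q - snd c)))).
  exists (fun p => f (h p)). split; auto. split.
  - exists f, h. split; [|split].
    + intros p q. unfold dist, f; cbn [fst snd]. f_equal. cbn [pow]. clean. nsatz.
    + exists c, (/mu). split; [apply Rinv_neq_0_compat; lra| intros; reflexivity].
    + intros; reflexivity.
  - assert (Hmu1 : mu * /mu = 1) by (field; lra).
    assert (E : image (fun p => f (h p)) Om =
      (fun q => Om (Fm c C Sn e (mu * fst q, mu * (snd q - sqrt 3/6))))).
    { apply functional_extensionality; intro q; apply propositional_extensionality; split.
      - intros [[px py] [Op ->]]. unfold Fm, f, h; cbn [fst snd].
        eapply ptS; [exact Op| |]; sfield.
      - intros Hq. exists (Fm c C Sn e (mu * fst q, mu*(snd q - sqrt 3/6))). split; auto.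
        destruct q as [qx qy]. unfold Fm, f, h; cbn [fst snd]; f_equal; sfield. }
    rewrite E; auto.
Qed.

Lemma Sg_sym Om c C Sn e cb sb A B th : symmetric_wrt (refl_dir c th) Om ->
  C*C+Sn*Sn=1 -> e*e=1 ->
  cos (2*th) = cb*(C*C-Sn*Sn) + sb*(2*Sn*C) -> sin (2*th) = sb*(C*C-Sn*Sn) - cb*(2*Sn*C) ->
  A = cb -> B = e * sb ->
  forall q, Om (Fm c C Sn e q) <-> Om (Fm c C Sn e (rAB A B q)).
Proof. intros HS H1 H2 H3 H4 H5 H6 q. rewrite (F_refl c C Sn e cb sb A B th q); auto. Qed.

Lemma Sg_convex Om c C Sn e : convex_set Om -> convex_set (fun q => Om (Fm c C Sn e q)).
Proof.
  intros H p q t Hp Hq Ht. pose proof (H _ _ t Hp Hq Ht) as K.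
  unfold Fm in *; cbn [fst snd] in *. eapply ptS; [exact K| ring | ring].
Qed.

Lemma lub_approx (E : R -> Prop) M : is_lub E M -> forall e, 0 < e -> exists y, E y /\ M - e < y.
Proof.
  intros [Hub Hl] e He. apply NNPP; intro N.
  assert (is_upper_bound E (M - e)).
  { intros y Ey. destruct (Rle_dec y (M-e)); auto. exfalso; apply N; exists y; split; auto; lra. }
  specialize (Hl _ H); lra.
Qed.

Lemma trig1 th phi : phi = PI/6 - th -> cos (2*th) = 1/2*(cos phi*cos phi-sin phi*sin phi)
   + sqrt 3/2*(2*sin phi*cos phi) /\
  sin (2*th) = sqrt 3/2*(cos phi*cos phi-sin phi*sin phi) - 1/2*(2*sin phi*cos phi).
Proof.
  intros Hp. replace (2*th) with (PI/3 - 2*phi) by (subst; field).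
  rewrite (cos_minus (PI/3) (2*phi)), (sin_minus (PI/3) (2*phi)), (cos_2a phi), (sin_2a phi), cos_PI3, sin_PI3.
  split; ring.
Qed.

Lemma trig2 th phi : phi = PI/6 - th -> cos (2*(th + PI/3)) = -1*(cos phi*cos phi-sin phi*sin phi)
   + 0*(2*sin phi*cos phi) /\
  sin (2*(th+PI/3)) = 0*(cos phi*cos phi-sin phi*sin phi) - -1*(2*sin phi*cos phi).
Proof.
  intros Hp. replace (2*(th+PI/3)) with (PI - 2*phi) by (subst; field).
  rewrite (cos_minus PI (2*phi)), (sin_minus PI (2*phi)), (cos_2a phi), (sin_2a phi), cos_PI, sin_PI.
  split; ring.
Qed.

Lemma trig3 th phi : phi = PI/6 - th -> cos (2*(th + 2*PI/3)) = 1/2*(cos phi*cos phi-sin phi*sin phi)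
   + -(sqrt 3/2)*(2*sin phi*cos phi) /\
  sin (2*(th+2*PI/3)) = -(sqrt 3/2)*(cos phi*cos phi-sin phi*sin phi) - 1/2*(2*sin phi*cos phi).
Proof.
  intros Hp.
  assert (C5 : cos (5*PI/3) = 1/2 /\ sin (5*PI/3) = -(sqrt 3/2)).
  { replace (5*PI/3) with (2*PI - PI/3) by field.
    rewrite (cos_minus (2*PI) (PI/3)), (sin_minus (2*PI) (PI/3)), cos_2PI, sin_2PI, cos_PI3, sin_PI3. split; ring. }
  destruct C5 as [C5 S5].
  replace (2*(th+2*PI/3)) with (5*PI/3 - 2*phi) by (subst; field).
  rewrite (cos_minus (5*PI/3) (2*phi)), (sin_minus (5*PI/3) (2*phi)), (cos_2a phi), (sin_2a phi), C5, S5.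
  split; ring.
Qed.

Theorem mainTheorem14 (Om : pt -> Prop) :
  bounded_set Om -> convex_set Om -> nonempty_interior Om ->
  triangle_symmetric Om ->
  exists (a : R) (g : pt -> pt),
    0 <= a <= 1/3 /\ similarity g /\ class_C a (image g Om).
Proof.
  intros [B HB] Hcv [o [r [Hr Hint]]] [c [th [Sy1 [Sy2 Sy3]]]].
  set (phi := PI/6 - th).
  assert (Hphi : phi = PI/6 - th) by reflexivity. clearbody phi.
  pose proof (trig1 th phi Hphi) as [T1c T1s].
  pose proof (trig2 th phi Hphi) as [T2c T2s].
  pose proof (trig3 th phi Hphi) as [T3c T3s].
  assert (HCS : cos phi * cos phi + sin phi * sin phi = 1).
  { pose proof (sin2_cos2 phi). unfold Rsqr in *. lra. }
  pose proof sqrt3_sq as Hs.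
  set (S1 := fun q => Om (Fm c (cos phi) (sin phi) 1 q)).
  assert (HK : forall q, S1 q -> Rabs (snd q) <= 2*B + Rabs (fst c) + Rabs (snd c)).
  { intros [x y] Hq. unfold S1 in Hq. pose proof (HB _ Hq) as D.
    pose proof (abs_fst_le_dist (Fm c (cos phi) (sin phi) 1 (x,y)) (0,0)) as D1.
    pose proof (abs_snd_le_dist (Fm c (cos phi) (sin phi) 1 (x,y)) (0,0)) as D2.
    unfold Fm in D, D1, D2; cbn [fst snd] in D, D1, D2.
    assert (E : y = sin phi * (cos phi * x + 1 * sin phi * y) + cos phi * (- sin phi * x + 1 * cos phi * y)).
    { transitivity ((cos phi * cos phi + sin phi * sin phi) * y); [rewrite HCS; ring | ring]. }
    cbn [fst snd]. rewrite E at 1.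
    pose proof (COS_bound phi); pose proof (SIN_bound phi).
    assert (Rabs (cos phi * x + 1 * sin phi * y) <= B + Rabs (fst c)) by rabs.
    assert (Rabs (- sin phi * x + 1 * cos phi * y) <= B + Rabs (snd c)) by rabs.
    set (u := cos phi * x + 1 * sin phi * y) in *.
    set (v := - sin phi * x + 1 * cos phi * y) in *.
    assert (Rabs (sin phi * u) <= Rabs u) by (rewrite Rabs_mult; pose proof (Rabs_pos u); assert (Rabs (sin phi) <= 1) by rabs; nra).
    assert (Rabs (cos phi * v) <= Rabs v) by (rewrite Rabs_mult; pose proof (Rabs_pos v); assert (Rabs (cos phi) <= 1) by rabs; nra).
    pose proof (Rabs_triang (sin phi * u) (cos phi * v)). lra. }
  set (K := 2*B + Rabs (fst c) + Rabs (snd c)) in HK.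
  set (q0 := (cos phi * (fst o - fst c) - sin phi * (snd o - snd c),
              sin phi * (fst o - fst c) + cos phi * (snd o - snd c))).
  set (q1 := (fst q0, snd q0 + r/2)).
  assert (S1q0 : S1 q0).
  { unfold S1. assert (E0 : Fm c (cos phi) (sin phi) 1 q0 = o).
    { destruct o as [ox oy]. unfold Fm, q0; cbn [fst snd]. f_equal; sfield. }
    rewrite E0. apply Hint. rewrite dist_refl. lra. }
  assert (S1q1 : S1 q1).
  { unfold S1. apply Hint.
    assert (E1 : Fm c (cos phi) (sin phi) 1 q1 = (fst o + sin phi * (r/2), snd o + cos phi*(r/2))).
    { destruct o as [ox oy]. unfold Fm, q1, q0; cbn [fst snd]. f_equal; sfield. }
    rewrite E1. unfold dist; cbn [fst snd].
    replace ((fst o - (fst o + sin phi * (r / 2))) ^ 2 + (snd o - (snd o + cos phi * (r / 2))) ^ 2)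
      with ((r/2)^2) by (cbn [pow]; sfield).
    rewrite sqrt_pow2; lra. }
  set (Ey := fun y => exists p, S1 p /\ y = snd p).
  set (Ey' := fun y => exists p, S1 p /\ y = - snd p).
  destruct (completeness Ey) as [M1 HM1].
  { exists K. intros y [p [Sp ->]]. pose proof (HK p Sp). rabs. }
  { exists (snd q0). exists q0. auto. }
  destruct (completeness Ey') as [M1' HM1'].
  { exists K. intros y [p [Sp ->]]. pose proof (HK p Sp). rabs. }
  { exists (- snd q0). exists q0. auto. }
  assert (Hb1 : forall p, S1 p -> -M1' <= snd p <= M1).
  { intros p Sp. split.
    - assert (- snd p <= M1') by (apply HM1'; exists p; auto). lra.
    - apply HM1; exists p; auto. }
  assert (Ap1 : forall e, 0 < e -> exists p, S1 p /\ snd p < -M1' + e).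
  { intros e He. destruct (lub_approx _ _ HM1' e He) as [y [[p [Sp ->]] Hy]]. exists p; split; auto; lra. }
  assert (AP1 : forall e, 0 < e -> exists p, S1 p /\ M1 - e < snd p).
  { intros e He. destruct (lub_approx _ _ HM1 e He) as [y [[p [Sp ->]] Hy]]. exists p; split; auto; lra. }
  assert (Hlt : -M1' < M1).
  { pose proof (Hb1 q0 S1q0); pose proof (Hb1 q1 S1q1). unfold q1 in *; cbn [snd] in *. lra. }
  destruct (Rle_dec (- -M1') M1) as [Hc|Hc].
  - pose proof (Sg_sym Om c (cos phi) (sin phi) 1 (-1) 0 (-1) 0 (th + PI/3) Sy2 HCS ltac:(lra) T2c T2s eq_refl ltac:(lra)) as Y1.
    pose proof (Sg_sym Om c (cos phi) (sin phi) 1 (1/2) (sqrt 3/2) (1/2) (sqrt 3/2) th Sy1 HCS ltac:(lra) T1c T1s eq_refl ltac:(lra)) as Y2.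
    pose proof (Sg_sym Om c (cos phi) (sin phi) 1 (1/2) (-(sqrt 3/2)) (1/2) (-(sqrt 3/2)) (th + 2*PI/3) Sy3 HCS ltac:(lra) T3c T3s eq_refl ltac:(lra)) as Y3.
    destruct (core S1 (-M1') M1 (Sg_convex Om c _ _ 1 Hcv) Y1 Y2 Y3 Hb1 Ap1 AP1 Hlt Hc) as [a [mu [Hmu [Ha HC]]]].
    exact (finish Om c (cos phi) (sin phi) 1 a mu HCS ltac:(lra) Hmu Ha HC).
  - set (S2 := fun q => Om (Fm c (cos phi) (sin phi) (-1) q)).
    assert (HS2 : forall q, S2 q <-> S1 (fst q, - snd q)).
    { intros [x y]; unfold S1, S2, Fm; cbn [fst snd]; split; intro H; eapply ptS; try exact H; lra. }
    assert (Hb2 : forall p, S2 p -> -M1 <= snd p <= M1').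
    { intros p Sp. apply HS2, Hb1 in Sp. cbn [snd] in Sp. lra. }
    assert (Ap2 : forall e, 0 < e -> exists p, S2 p /\ snd p < -M1 + e).
    { intros e He. destruct (AP1 e He) as [p [Sp Hp]]. exists (fst p, - snd p). split; [|cbn [snd]; lra].
      apply HS2. cbn [fst snd]. destruct p as [px py]. eapply ptS; [exact Sp| cbn; lra | cbn; lra]. }
    assert (AP2 : forall e, 0 < e -> exists p, S2 p /\ M1' - e < snd p).
    { intros e He. destruct (Ap1 e He) as [p [Sp Hp]]. exists (fst p, - snd p). split; [|cbn [snd]; lra].
      apply HS2. cbn [fst snd]. destruct p as [px py]. eapply ptS; [exact Sp| cbn; lra | cbn; lra]. }
    pose proof (Sg_sym Om c (cos phi) (sin phi) (-1) (-1) 0 (-1) 0 (th + PI/3) Sy2 HCS ltac:(lra) T2c T2s eq_refl ltac:(lra)) as Y1.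
    pose proof (Sg_sym Om c (cos phi) (sin phi) (-1) (1/2) (-(sqrt 3/2)) (1/2) (sqrt 3/2) (th + 2*PI/3) Sy3 HCS ltac:(lra) T3c T3s eq_refl ltac:(lra)) as Y2.
    pose proof (Sg_sym Om c (cos phi) (sin phi) (-1) (1/2) (sqrt 3/2) (1/2) (-(sqrt 3/2)) th Sy1 HCS ltac:(lra) T1c T1s eq_refl ltac:(lra)) as Y3.
    destruct (core S2 (-M1) M1' (Sg_convex Om c _ _ (-1) Hcv) Y1 Y2 Y3 Hb2 Ap2 AP2 ltac:(lra) ltac:(lra)) as [a [mu [Hmu [Ha HC]]]].
    exact (finish Om c (cos phi) (sin phi) (-1) a mu HCS ltac:(lra) Hmu Ha HC).
Qed.
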